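(* Let $J\subseteq[t_i,t_{i+1}]$ be an elementary interval, and (after replacing each $\sigma(t)$ by $\sigma(t)-\mathcal{I}(t)$) assume $\mathcal{I}\equiv 0$ on $J$, so the entities move along $n$ non-horizontal lines in the $(t,y)$-plane forming an arrangement $\mathcal{A}$. If $(t,\sigma,\psi)$ with $t\in J$ is a break point of type (ii) of some lower envelope $L_j$, then the points $(t,\sigma(t))$ and $(t,\psi(t))$ lie on the boundary $\partial\mathcal{Z}$ of the zone $\mathcal{Z}$ of the line $y=0$ in $\mathcal{A}$.
   Context: Entities of a set $\mathcal{X}$ of size $n$ move in $\mathbb{R}^1$ along piecewise-linear trajectories with vertices at common times $t_0<\dots<t_\tau$; $\varepsilon>0$ is fixed; trajectories are in general position (no three meet at one point at the same time, no two pairs are at distance exactly $\varepsilon$ at the same time). $\mathcal{I}(t)=(\max_\sigma\sigma(t)+\min_\sigma\sigma(t))/2$; an elementary interval is a maximal subinterval of some $[t_i,t_{i+1}]$ on which $\mathcal{I}$ is linear. Two entities are $\varepsilon$-connected at time $t$ if they are joined by a chain of entities with consecutive distances at most $\varepsilon$ at time $t$. At each time, $\mathcal{X}$ is partitioned into $\varepsilon$-connectivity classes; let $(\mathcal{X}_1,J_1),\dots,(\mathcal{X}_m,J_m)$ be all pairs where $J_j$ is a maximal time interval during which $\mathcal{X}_j$ is one of these classes at every time. Let $f_\sigma(t)=|\sigma(t)-\mathcal{I}(t)|$ and $L_j$ the lower envelope of $\{f_\sigma:\sigma\in\mathcal{X}_j\}$ restricted to $J_j$. A break point of $L_j$ is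 a triple $(t,\sigma,\psi)$, $\sigma\neq\psi\in\mathcal{X}_j$, $t\in J_j$, with $L_j(t)=f_\sigma(t)=f_\psi(t)$; it is of type (i) if $\sigma(t)=\psi(t)$ and of type (ii) if $\sigma(t)-\mathcal{I}(t)=-(\psi(t)-\mathcal{I}(t))\neq 0$. The zone of a line in an arrangement is the set of faces intersected by the line together with their boundary edges. *)

(* Defs.v *)
From Stdlib Require Import Reals Lra List Relations.
Open Scope R_scope.

Definition ent (n k : nat) : Prop := (k < n)%nat.

Definition maxpos (n : nat) (pos : nat -> R -> R) (t : R) : R :=
  fold_right Rmax (pos 0%nat t) (map (fun k => pos k t) (seq 0 n)).
Definition minpos (n : nat) (pos : nat -> R -> R) (t : R) : R :=
  fold_right Rmin (pos 0%nat t) (map (fun k => pos k t) (seq 0 n)).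

Definition Imid (n : nat) (pos : nat -> R -> R) (t : R) : R :=
  (maxpos n pos t + minpos n pos t) / 2.

Definition Dom (tau : nat) (tt : nat -> R) (t : R) : Prop :=
  tt 0%nat <= t <= tt tau.

Definition times_increasing (tau : nat) (tt : nat -> R) : Prop :=
  forall i, (i < tau)%nat -> tt i < tt (S i).

Definition piecewise_linear (n tau : nat) (tt : nat -> R) (pos : nat -> R -> R) : Prop :=
  forall k, ent n k -> forall i, (i < tau)%nat ->
    exists c d, forall t, tt i <= t <= tt (S i) -> pos k t = c * t + d.

Definition general_position (n tau : nat) (tt : nat -> R) (eps : R)
  (pos : nat -> R -> R) : Prop :=
  (forall t, Dom tau tt t -> forall s p q, ent n s -> ent n p -> ent n q ->
     s <> p -> p <> q -> s <> q ->
     ~ (pos s t = pos p t /\ pos p t = pos q t)) /\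
  (forall t, Dom tau tt t -> forall s p q r, ent n s -> ent n p -> ent n q -> ent n r ->
     s <> p -> q <> r -> ~ ((s = q /\ p = r) \/ (s = r /\ p = q)) ->
     ~ (Rabs (pos s t - pos p t) = eps /\ Rabs (pos q t - pos r t) = eps)).

Definition linear_on (F : R -> R) (lo hi : R) : Prop :=
  exists c d, forall t, lo <= t <= hi -> F t = c * t + d.

Definition elementary_interval (n tau : nat) (tt : nat -> R) (pos : nat -> R -> R)
  (i : nat) (ja jb : R) : Prop :=
  (i < tau)%nat /\ tt i <= ja <= jb /\ jb <= tt (S i) /\
  linear_on (Imid n pos) ja jb /\
  forall ja' jb', tt i <= ja' <= ja -> jb <= jb' <= tt (S i) ->
    linear_on (Imid n pos) ja' jb' -> ja' = ja /\ jb' = jb.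

Definition eps_close (n : nat) (eps : R) (pos : nat -> R -> R) (t : R) (s p : nat) : Prop :=
  ent n s /\ ent n p /\ Rabs (pos s t - pos p t) <= eps.

Definition eps_connected (n : nat) (eps : R) (pos : nat -> R -> R) (t : R) (s p : nat) : Prop :=
  ent n s /\ ent n p /\ clos_refl_trans nat (eps_close n eps pos t) s p.

Definition is_class (n : nat) (eps : R) (pos : nat -> R -> R) (X : nat -> Prop) (t : R) : Prop :=
  (exists s, X s) /\ (forall s, X s -> ent n s) /\
  (forall s p, X s -> (X p <-> eps_connected n eps pos t s p)).

Definition is_time_interval (S : R -> Prop) : Prop :=
  forall x y z, S x -> S z -> x <= y <= z -> S y.

(* (X, Jj) is one of the pairs (X_j, J_j): Jj is a maximal time interval
   during which X is a connectivity class at every time *)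
Definition class_pair (n tau : nat) (tt : nat -> R) (eps : R) (pos : nat -> R -> R)
  (X : nat -> Prop) (Jj : R -> Prop) : Prop :=
  is_time_interval Jj /\ (exists t, Jj t) /\
  (forall t, Jj t -> Dom tau tt t /\ is_class n eps pos X t) /\
  (forall J', is_time_interval J' -> (forall t, Jj t -> J' t) ->
     (forall t, J' t -> Dom tau tt t /\ is_class n eps pos X t) ->
     forall t, J' t -> Jj t).

Definition fdist (n : nat) (pos : nat -> R -> R) (s : nat) (t : R) : R :=
  Rabs (pos s t - Imid n pos t).

Definition lower_env_val (n : nat) (pos : nat -> R -> R) (X : nat -> Prop) (t v : R) : Prop :=
  (exists s, X s /\ fdist n pos s t = v) /\ (forall s, X s -> v <= fdist n pos s t).

Definition break_point (n : nat) (pos : nat -> R -> R) (X : nat -> Prop) (Jj : R -> Prop)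
  (t : R) (s p : nat) : Prop :=
  s <> p /\ X s /\ X p /\ Jj t /\
  lower_env_val n pos X t (fdist n pos s t) /\ fdist n pos s t = fdist n pos p t.

Definition break_type_ii (n : nat) (pos : nat -> R -> R) (t : R) (s p : nat) : Prop :=
  pos s t - Imid n pos t = - (pos p t - Imid n pos t) /\ pos s t - Imid n pos t <> 0.

(* The arrangement of the n lines y = a k * t + b k in the (t,y)-plane. *)
Definition lineval (a b : nat -> R) (k : nat) (q : R * R) : R :=
  snd q - (a k * fst q + b k).

(* 2-dimensional faces: nonempty cells with a fixed (nonzero) sign vector *)
Definition face (n : nat) (a b : nat -> R) (F : R * R -> Prop) : Prop :=
  (exists sg : nat -> bool, forall q, F q <->
     (forall k, ent n k -> if sg k then 0 < lineval a b k q else lineval a b k q < 0))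
  /\ (exists q, F q).

Definition zone_face (n : nat) (a b : nat -> R) (F : R * R -> Prop) : Prop :=
  face n a b F /\ exists t, F (t, 0).

Definition closure (F : R * R -> Prop) (q : R * R) : Prop :=
  forall d, 0 < d -> exists r, F r /\ Rabs (fst r - fst q) < d /\ Rabs (snd r - snd q) < d.

Definition on_zone_boundary (n : nat) (a b : nat -> R) (q : R * R) : Prop :=
  exists F, zone_face n a b F /\ closure F q /\ ~ F q.

(* Main.v *)
Require Import Defs.
From Stdlib Require Import Reals Lra List Relations.
Open Scope R_scope.

Lemma cross (Rel : nat -> nat -> Prop) (f : nat -> R) (x : R) u v :
  clos_refl_trans_1n nat Rel u v -> f u > x -> f v < x ->
  exists w w', clos_refl_trans nat Rel u w /\ Rel w w' /\ f w > x /\ x >= f w'.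
Proof.
  induction 1 as [u|u u' v Hr Hc IH]; intros Hu Hv.
  - lra.
  - destruct (Rle_dec (f u') x) as [Hle|Hgt].
    + exists u, u'. split; [apply rt_refl|]. repeat split; auto; lra.
    + destruct (IH ltac:(lra) Hv) as [w [w' [H1 [H2 [H3 H4]]]]].
      exists w, w'. split; auto.
      eapply rt_trans; [apply rt_step; exact Hr| exact H1].
Qed.

Lemma key n eps (pos : nat -> R -> R) X t s p k :
  is_class n eps pos X t -> X s -> X p -> ent n k ->
  pos s t > pos k t -> pos p t < pos k t -> X k.
Proof.
  intros [_ [Hent Hcl]] Hs Hp Hk H1 H2.
  destruct (proj1 (Hcl s p Hs) Hp) as [_ [_ Hrt]].
  apply clos_rt_rt1n in Hrt.
  destruct (cross (eps_close n eps pos t) (fun j => pos j t) (pos k t) s p Hrt H1 H2)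
    as [w [w' [Hw [[Hw1 [Hw2 Hd]] [Hg Hl]]]]].
  apply (proj2 (Hcl s k Hs)).
  split; [apply Hent; auto|]. split; auto.
  eapply rt_trans; [exact Hw|]. apply rt_step.
  split; auto. split; auto.
  apply Rabs_le. destruct (Rle_lt_dec 0 (pos w t - pos w' t)); [rewrite Rabs_right in Hd|rewrite Rabs_left in Hd]; lra.
Qed.

Lemma zone_bd n (a b : nat -> R) t y0 m :
  0 < y0 -> (forall k, ent n k -> y0 <= Rabs (a k * t + b k)) ->
  ent n m -> Rabs (a m * t + b m) = y0 ->
  on_zone_boundary n a b (t, a m * t + b m).
Proof.
  intros Hy Hall Hm Hc.
  set (sg := fun k => if Rlt_dec 0 (lineval a b k (t,0)) then true else false).
  set (F := fun q => forall k, ent n k ->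
              if sg k then 0 < lineval a b k q else lineval a b k q < 0).
  assert (HF : forall z, Rabs z < y0 -> F (t, z)).
  { intros z Hz k Hk. specialize (Hall k Hk). unfold sg, lineval in *; simpl in *.
    apply Rabs_def2 in Hz.
    destruct (Rlt_dec 0 (0 - (a k * t + b k))).
    - rewrite Rabs_left in Hall by lra. lra.
    - destruct (Rle_lt_dec 0 (a k * t + b k)).
      + rewrite Rabs_right in Hall by lra. lra.
      + lra. }
  exists F. split; [split|split].
  - split; [exists sg; intro q; unfold F; tauto|].
    exists (t,0). apply HF. rewrite Rabs_R0. lra.
  - exists t. apply HF. rewrite Rabs_R0. lra.
  - intros d Hd. set (c := a m * t + b m).
    set (mm := Rmin (d/2) y0).
    assert (Hmm1 : 0 < mm) by (unfold mm; apply Rmin_glb_lt; lra).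
    assert (Hmm2 : mm <= y0) by apply Rmin_r.
    assert (Hmm3 : mm <= d/2) by apply Rmin_l.
    fold c in Hc.
    destruct (Rle_lt_dec 0 c).
    + rewrite Rabs_right in Hc by lra.
      exists (t, c - mm). simpl. split.
      * apply HF. apply Rabs_def1; lra.
      * split; [replace (t - t) with 0 by ring; rewrite Rabs_R0; lra|].
        replace (c - mm - c) with (- mm) by ring. rewrite Rabs_Ropp, Rabs_right; lra.
    + rewrite Rabs_left in Hc by lra.
      exists (t, c + mm). simpl. split.
      * apply HF. apply Rabs_def1; lra.
      * split; [replace (t - t) with 0 by ring; rewrite Rabs_R0; lra|].
        replace (c + mm - c) with mm by ring. rewrite Rabs_right; lra.
  - intro H. specialize (H m Hm). unfold lineval in H; simpl in H.
    replace (a m * t + b m - (a m * t + b m)) with 0 in H by ring.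
    destruct (sg m); lra.
Qed.

Theorem mainTheorem4 :
  forall (n tau : nat) (tt : nat -> R) (eps : R) (pos : nat -> R -> R)
         (i : nat) (ja jb : R) (a b : nat -> R)
         (X : nat -> Prop) (Jj : R -> Prop) (t : R) (s p : nat),
    0 < eps ->
    times_increasing tau tt ->
    piecewise_linear n tau tt pos ->
    general_position n tau tt eps pos ->
    elementary_interval n tau tt pos i ja jb ->
    (forall u, ja <= u <= jb -> Imid n pos u = 0) ->
    (forall k, ent n k -> forall u, ja <= u <= jb -> pos k u = a k * u + b k) ->
    class_pair n tau tt eps pos X Jj ->
    ja <= t <= jb ->
    break_point n pos X Jj t s p ->
    break_type_ii n pos t s p ->
    on_zone_boundary n a b (t, pos s t) /\ on_zone_boundary n a b (t, pos p t).
Proof.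
  intros n tau tt eps pos i ja jb a b X Jj t s p Heps _ _ _ _ HI Hlin Hcp Ht
    [Hsp [Hs [Hp [HJ [[_ Hlow] Heq]]]]] [Hii Hnz].
  destruct Hcp as [_ [_ [Hcl _]]]. destruct (Hcl t HJ) as [_ Hclass].
  pose proof Hclass as [_ [Hent _]].
  rewrite (HI t Ht) in Hii, Hnz. rewrite Rminus_0_r in Hii, Hnz.
  set (y0 := Rabs (pos s t)).
  assert (Hy : 0 < y0) by (apply Rabs_pos_lt; auto).
  assert (Hall : forall k, ent n k -> y0 <= Rabs (pos k t)).
  { intros k Hk. destruct (Rle_lt_dec y0 (Rabs (pos k t))) as [|Hlt]; auto.
    exfalso.
    assert (HX : X k).
    { unfold y0 in *. apply Rabs_def2 in Hlt.
      destruct (Rle_lt_dec 0 (pos s t)).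
      - rewrite Rabs_right in Hlt by lra.
        apply (key n eps pos X t s p k); auto; lra.
      - rewrite Rabs_left in Hlt by lra.
        apply (key n eps pos X t p s k); auto; lra. }
    specialize (Hlow k HX). unfold fdist in Hlow. rewrite (HI t Ht) in Hlow.
    rewrite !Rminus_0_r in Hlow. unfold y0 in Hlt. lra. }
  assert (Hall' : forall k, ent n k -> y0 <= Rabs (a k * t + b k)).
  { intros k Hk. rewrite <- (Hlin k Hk t Ht). auto. }
  rewrite (Hlin s (Hent s Hs) t Ht), (Hlin p (Hent p Hp) t Ht).
  split; apply (zone_bd n a b t y0); auto.
  - unfold y0. rewrite (Hlin s (Hent s Hs) t Ht). reflexivity.
  - unfold y0. rewrite <- (Hlin p (Hent p Hp) t Ht). rewrite Hii, Rabs_Ropp, Rminus_0_r. reflexivity.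
Qed.
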